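(* For any pair of $n$-dimensional nested lattices $\Lambda\subseteq\Lambda_f\subset\mathbb{R}^n$ and any $\mathbf{x}\in\mathbb{R}^n$, $$[Q_{\Lambda_f}(\mathbf{x})]\bmod\Lambda=Q_{\Lambda_f}\big([\mathbf{x}]\bmod\Lambda\big)+Q_{\Lambda}\Big([Q_{\Lambda_f}(\mathbf{x})]\bmod\Lambda+\mathbf{x}-Q_{\Lambda_f}(\mathbf{x})\Big).$$
   Context: For a lattice $L\subset\mathbb{R}^n$ with Voronoi region $\mathcal{V}_L$ (the set of points whose nearest lattice point is $\mathbf{0}$, ties broken systematically so that $\mathcal{V}_L$ is a fundamental domain), $Q_L(\mathbf{y})$ is the unique $\mathbf{t}\in L$ with $\mathbf{y}-\mathbf{t}\in\mathcal{V}_L$, and $[\mathbf{y}]\bmod L=\mathbf{y}-Q_L(\mathbf{y})$. *)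

(* Defs.v *)
From HB Require Import structures.
From mathcomp Require Import all_boot all_order all_algebra.
From mathcomp Require Import boolp classical_sets reals.
Set Implicit Arguments. Unset Strict Implicit. Unset Printing Implicit Defensive.
Import Order.TTheory GRing.Theory Num.Theory.
Local Open Scope classical_set_scope.
Local Open Scope ring_scope.

Definition sqnorm (R : realType) (n : nat) (v : 'rV[R]_n) : R :=
  \sum_(i < n) v ord0 i ^+ 2.

Definition is_lattice (R : realType) (n : nat) (L : set 'rV[R]_n) : Prop :=
  exists B : 'M[R]_n, B \in unitmx /\
    L = [set v | exists z : 'rV[int]_n, v = map_mx (fun k : int => k%:~R) z *m B].

(* V is a Voronoi region of L with ties broken so that it is a fundamental
   domain: every point of V has 0 as a nearest lattice point, and every y has
   a unique lattice point t with y - t in V. *)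
Definition is_voronoi_region (R : realType) (n : nat) (L V : set 'rV[R]_n) : Prop :=
  (forall v t, V v -> L t -> sqnorm v <= sqnorm (v - t)) /\
  (forall y, exists! t, L t /\ V (y - t)).

(* Q_L(y): the (unique, given is_voronoi_region) t in L with y - t in V. *)
Definition Q (R : realType) (n : nat) (L V : set 'rV[R]_n) (y : 'rV[R]_n) : 'rV[R]_n :=
  xget 0 [set t | L t /\ V (y - t)].

Definition modL (R : realType) (n : nat) (L V : set 'rV[R]_n) (y : 'rV[R]_n) : 'rV[R]_n :=
  y - Q L V y.

(* Main.v *)
Require Import Defs.
From HB Require Import structures.
From mathcomp Require Import all_boot all_order all_algebra.
From mathcomp Require Import boolp classical_sets reals.
Import Order.TTheory GRing.Theory Num.Theory.
Local Open Scope classical_set_scope.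
Local Open Scope ring_scope.

Lemma lat_sub (R : realType) (n : nat) (L : set 'rV[R]_n) a b :
  is_lattice L -> L a -> L b -> L (a - b).
Proof.
move=> [B [_ ->]] [z1 ->] [z2 ->]; exists (z1 - z2).
rewrite -mulmxBl; congr (_ *m _); apply/matrixP => i j; rewrite !mxE.
by rewrite intrD intrN.
Qed.

Lemma Q_spec (R : realType) (n : nat) (L V : set 'rV[R]_n) y :
  is_voronoi_region L V -> L (Q L V y) /\ V (y - Q L V y).
Proof.
move=> [_ H]; have [t [Ht _]] := H y.
by apply: (@xgetPex _ 0 [set t | L t /\ V (y - t)]); exists t.
Qed.

Lemma Q_uniq (R : realType) (n : nat) (L V : set 'rV[R]_n) y t :
  is_voronoi_region L V -> L t -> V (y - t) -> Q L V y = t.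
Proof.
move=> hv Lt Vt; have [Lq Vq] := (@Q_spec _ _ _ _ y hv).
have [_ H] := hv; have [u [_ Hu]] := H y.
by rewrite -(Hu _ (conj Lq Vq)) (Hu _ (conj Lt Vt)).
Qed.

Lemma Q_shift (R : realType) (n : nat) (L V : set 'rV[R]_n) y a :
  is_lattice L -> is_voronoi_region L V -> L a -> Q L V (y - a) = Q L V y - a.
Proof.
move=> hl hv La; have [Lq Vq] := (@Q_spec _ _ _ _ y hv).
apply: Q_uniq => //; first exact: lat_sub.
by rewrite opprB addrA subrK.
Qed.

Theorem lemma5 (R : realType) (n : nat) (L Lf V Vf : set 'rV[R]_n) :
  is_lattice L -> is_lattice Lf -> L `<=` Lf ->
  is_voronoi_region L V -> is_voronoi_region Lf Vf ->
  forall x : 'rV[R]_n,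
    modL L V (Q Lf Vf x) =
    Q Lf Vf (modL L V x) + Q L V (modL L V (Q Lf Vf x) + x - Q Lf Vf x).
Proof.
move=> hL hLf sub hV hVf x; rewrite /modL.
have [La _] := (@Q_spec _ _ _ _ x hV).
have [Lb _] := (@Q_spec _ _ L V (Q Lf Vf x) hV).
rewrite Q_shift //; last exact: sub.
have -> : Q Lf Vf x - Q L V (Q Lf Vf x) + x - Q Lf Vf x = x - Q L V (Q Lf Vf x).
  by rewrite addrAC [_ - _ - _]addrAC subrr add0r addrC.
rewrite Q_shift //.
by rewrite addrA subrK.
Qed.
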